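(* Let $P$ be an irreducible positive recurrent stochastic kernel on a countable set $I$ with stationary distribution $\pi$, let $\widetilde{P}$ be a stochastic kernel on a countable set $\widetilde{I}$ and $\Lambda=(\Lambda(\widetilde{x},x):\widetilde{x}\in\widetilde{I},x\in I)$ a stochastic matrix with $\widetilde{P}\Lambda=\Lambda P$. Define the kernel $\underline{P}$ on $I\times\widetilde{I}$ by $$\underline{P}\big((x,\widetilde{x}),(y,\widetilde{y})\big)=\frac{P(x,y)\,\widetilde{P}(\widetilde{x},\widetilde{y})\,\Lambda(\widetilde{y},y)}{(\Lambda P)(\widetilde{x},y)}\,\mathbf{1}\big((\Lambda P)(\widetilde{x},y)>0\big),$$ and let $(X,\widetilde{X})$ be the Markov chain with kernel $\underline{P}$. Fix $\widetilde{\partial}\in\widetilde{I}$. Assume $\widetilde{\mu}$ is a quasi-stationary distribution for the chain $\widetilde{X}$ (with kernel $\widetilde{P}$) with forbidden state $\widetilde{\partial}$. Then the probability measure $$\underline{\mu}(x_0,\widetilde{x}_0)=\widetilde{\mu}(\widetilde{x}_0)\,\Lambda(\widetilde{x}_0,x_0),\qquad (x_0,\widetilde{x}_0)\in I\times(\widetilde{I}\setminus\{\widetilde{\partial}\}),$$ is a quasi-stationary distribution for $(X,\widetilde{X})$ with forbidden set $\underline{\partial}=I\times\{\widetilde{\partial}\}$.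
   Context: For a Markov chain $Y=(Y_n)_{n\ge0}$ on a countable set $J$ with stochastic kernel $Q$ and a nonempty proper subset $K\subset J$ with hitting time $\tau_K=\inf\{n\ge0:Y_n\in K\}$, a probability measure $\mu$ on $J\setminus K$ is a quasi-stationary distribution (q.s.d.) for $Y$ with forbidden set $K$ if $\mathbb{P}_\mu(Y_n=j\mid\tau_K>n)=\mu(j)$ for all $j\in J\setminus K$ and all $n\ge0$; equivalently, there is $\gamma$ with $\sum_{i\in J\setminus K}\mu(i)Q(i,j)=\gamma\mu(j)$ for all $j\in J\setminus K$. $\mathbb{P}_\mu$ is the law of the chain with initial distribution $\mu$. *)

(* Defs.v *)
From HB Require Import structures.
From mathcomp Require Import all_boot all_order all_algebra.
From mathcomp Require Import all_classical all_reals all_analysis.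
Set Implicit Arguments. Unset Strict Implicit. Unset Printing Implicit Defensive.
Import Order.TTheory GRing.Theory Num.Theory.
Local Open Scope classical_set_scope.
Local Open Scope ring_scope.

Section Kernels.
Variable R : realType.

Definition mc_comp (A B C : countType) (M : A -> B -> R) (N : B -> C -> R) : A -> C -> R :=
  fun a c => fine (\esum_(b in [set: B]) (M a b * N b c)%:E).

Definition mc_id (A : countType) : A -> A -> R := fun a b => (a == b)%:R.

Fixpoint mc_pow (A : countType) (n : nat) (M : A -> A -> R) : A -> A -> R :=
  match n with
  | 0 => mc_id (A:=A)
  | n'.+1 => mc_comp (mc_pow n' M) M
  end.

Definition mc_stochastic (A B : countType) (M : A -> B -> R) : Prop :=
  (forall a b, 0 <= M a b) /\ (forall a, \esum_(b in [set: B]) (M a b)%:E = 1%E).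

Definition mc_prob (A : countType) (m : A -> R) : Prop :=
  (forall a, 0 <= m a) /\ \esum_(a in [set: A]) (m a)%:E = 1%E.

Definition mc_taboo (A : countType) (Q : A -> A -> R) (K : set A) : A -> A -> R :=
  fun i j => if `[< K j >] then 0 else Q i j.

Definition mc_irreducible (A : countType) (P : A -> A -> R) : Prop :=
  forall x y, exists n, 0 < mc_pow n P x y.

(* P_x(T_x^+ > n) = sum_z (mc_taboo P {x})^n (x,z), T_x^+ = inf{n >= 1 : X_n = x} *)
Definition ret_tail (A : countType) (P : A -> A -> R) (x : A) (n : nat) : R :=
  fine (\esum_(z in [set: A]) (mc_pow n (mc_taboo P [set x]) x z)%:E).

(* positive recurrence: E_x[T_x^+] = sum_n P_x(T_x^+ > n) < +oo for every x *)
Definition mc_positive_recurrent (A : countType) (P : A -> A -> R) : Prop :=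
  forall x, (\sum_(0 <= n <oo) (ret_tail P x n)%:E < +oo)%E.

Definition mc_stationary (A : countType) (P : A -> A -> R) (pi : A -> R) : Prop :=
  mc_prob pi /\
  forall y, \esum_(x in [set: A]) (pi x * P x y)%:E = (pi y)%:E.

(* P_mu(Y_n = j, tau_K > n) *)
Definition surv_prob (J : countType) (Q : J -> J -> R) (K : set J) (mu : J -> R)
  (n : nat) (j : J) : R :=
  fine (\esum_(i in [set: J]) (mu i * mc_pow n (mc_taboo Q K) i j)%:E).

(* P_mu(tau_K > n) *)
Definition surv_total (J : countType) (Q : J -> J -> R) (K : set J) (mu : J -> R)
  (n : nat) : R :=
  fine (\esum_(j in ~` K) (surv_prob Q K mu n j)%:E).

Definition mc_qsd (J : countType) (Q : J -> J -> R) (K : set J) (mu : J -> R) : Prop :=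
  [/\ forall j, 0 <= mu j,
      forall j, K j -> mu j = 0,
      \esum_(j in ~` K) (mu j)%:E = 1%E &
      forall n, 0 < surv_total Q K mu n /\
        forall j, ~ K j -> surv_prob Q K mu n j / surv_total Q K mu n = mu j].

Definition coupled_kernel (I It : countType) (P : I -> I -> R) (Pt : It -> It -> R)
  (Lam : It -> I -> R) : (I * It)%type -> (I * It)%type -> R :=
  fun p q =>
    let LP := mc_comp Lam P p.2 q.1 in
    if 0 < LP then P p.1 q.1 * Pt p.2 q.2 * Lam q.2 q.1 / LP else 0.

End Kernels.

(* Main.v *)
Require Import Defs.
From HB Require Import structures.
From mathcomp Require Import all_boot all_order all_algebra.
From mathcomp Require Import all_classical all_reals all_analysis.
From mathcomp Require Import ring.
Import Order.TTheory GRing.Theory Num.Theory.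
Set Implicit Arguments. Unset Strict Implicit. Unset Printing Implicit Defensive.
Local Open Scope classical_set_scope.
Local Open Scope ring_scope.

Section Helpers.
Variable R : realType.
Local Open Scope ereal_scope.

Lemma fineK_le (e : \bar R) (c : R) : 0 <= e -> e <= c%:E -> (fine e)%:E = e.
Proof. move=> e0 ec; apply: fineK; rewrite ge0_fin_numE //; exact: le_lt_trans ec (ltry _). Qed.

Lemma esumZl (T : choiceType) (S : set T) (c : R) (a : T -> \bar R) :
  (0 <= c)%R -> (forall i, 0 <= a i) ->
  \esum_(i in S) (c%:E * a i) = c%:E * \esum_(i in S) a i.
Proof.
move=> c0 a0.
have le1 : forall (d : R) (b : T -> \bar R), (0 <= d)%R -> (forall i, 0 <= b i) ->
    \esum_(i in S) (d%:E * b i) <= d%:E * \esum_(i in S) b i.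
  move=> d b d0 b0; apply: ge_ereal_sup => _ [X XS <-] /=.
  rewrite -ge0_mule_fsumr //; apply: lee_wpmul2l; first by rewrite lee_fin.
  by apply: ereal_sup_ubound; exists X.
apply/eqP; rewrite eq_le le1 //=.
have [->|c0'] := eqVneq c 0%R.
  by rewrite mul0e esum_ge0 // => i _; rewrite mul0e.
have -> : \esum_(i in S) a i = \esum_(i in S) (c^-1%:E * (c%:E * a i)).
  by apply: eq_esum => i _; rewrite muleA -EFinM mulVf // mul1e.
apply: le_trans (lee_wpmul2l _ (le1 _ _ _ _)) _.
- by rewrite lee_fin.
- by rewrite invr_ge0.
- by move=> i; apply: mule_ge0; rewrite ?lee_fin.
by rewrite muleA -EFinM divff // mul1e.
Qed.

Lemma entry_le (T : choiceType) (a : T -> \bar R) j :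
  (forall i, 0 <= a i) -> a j <= \esum_(i in [set: T]) a i.
Proof.
move=> a0; apply: esum_ge; exists [set j]; first by split => //; exact: finite_set1.
by rewrite fsbig_set1.
Qed.

Lemma esum_swap (T1 T2 : choiceType) (f : T1 -> T2 -> \bar R) :
  (forall i j, 0 <= f i j) ->
  \esum_(i in [set: T1]) \esum_(j in [set: T2]) f i j =
  \esum_(j in [set: T2]) \esum_(i in [set: T1]) f i j.
Proof.
move=> f0; rewrite !esum_esum //.
have -> : [set: T1] `*`` (fun _ => [set: T2]) = [set: T1 * T2] by apply/seteqP; split.
have -> : [set: T2] `*`` (fun _ => [set: T1]) = [set: T2 * T1] by apply/seteqP; split.
rewrite (@reindex_esum R _ _ [set: T2 * T1] [set: T1 * T2]
           (fun k => (k.2, k.1))) //.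
rewrite setTT_bijective; exists (fun k => (k.2, k.1)); by case.
Qed.

Lemma esum_swapS (T1 T2 : choiceType) (A : set T1) (B : set T2) (f : T1 -> T2 -> \bar R) :
  (forall i j, 0 <= f i j) ->
  \esum_(i in A) \esum_(j in B) f i j = \esum_(j in B) \esum_(i in A) f i j.
Proof.
have E : forall (U1 U2 : choiceType) (A : set U1) (B : set U2) (g : U1 -> U2 -> \bar R),
  \esum_(i in A) \esum_(j in B) g i j =
  \esum_(i in [set: U1]) \esum_(j in [set: U2]) (if (i \in A) && (j \in B) then g i j else 0).
  move=> U1 U2 A' B' g; rewrite esum_mkcond; apply: eq_esum => i _.
  rewrite esum_mkcond; case: (i \in A') => //=; by rewrite esum1.
move=> f0; rewrite E (E _ _ B A) esum_swap; last by move=> i j; case: ifP.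
by apply: eq_esum => j _; apply: eq_esum => i _; rewrite andbC.
Qed.

Lemma esum_pair (A B : choiceType) (f : A * B -> \bar R) : (forall p, 0 <= f p) ->
  \esum_(p in [set: A * B]) f p = \esum_(a in [set: A]) \esum_(b in [set: B]) f (a, b).
Proof.
move=> f0; rewrite esum_esum //.
have -> : [set: A] `*`` (fun _ => [set: B]) = [set: A * B] by apply/seteqP; split.
by apply: eq_esum => -[a b].
Qed.

Lemma esum_single (T : choiceType) (g : T -> \bar R) j :
  (forall i, i != j -> g i = 0) -> 0 <= g j -> \esum_(i in [set: T]) g i = g j.
Proof.
move=> g0 gj; rewrite (esumID [set j]); last first.
  by move=> i _; have [->|/g0 ->] := eqVneq i j.
rewrite setTI esum_set1 // esum1 ?adde0 // => i [_ /eqP]; exact: g0.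
Qed.

Lemma esum_zero_off (T : choiceType) (K : set T) (m : T -> \bar R) :
  (forall j, K j -> m j = 0) -> (forall j, 0 <= m j) ->
  \esum_(j in [set: T]) m j = \esum_(j in ~` K) m j.
Proof.
move=> mK m0; rewrite (esumID K) // esum1 ?add0e ?setTI //.

Qed.

Definition subst (A B : countType) (M : A -> B -> R) :=
  (forall a b, (0 <= M a b)%R) /\ (forall a, \esum_(b in [set: B]) (M a b)%:E <= 1).

Lemma subst_entry (A B : countType) (M : A -> B -> R) a b : subst M -> (M a b <= 1)%R.
Proof.
move=> [M0 M1]; rewrite -lee_fin; apply: le_trans (M1 a).
by apply: (@entry_le _ (fun b => (M a b)%:E)) => i; rewrite lee_fin.
Qed.

Lemma comp_E (A B C : countType) (M : A -> B -> R) (N : B -> C -> R) a c :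
  subst M -> subst N -> (mc_comp M N a c)%:E = \esum_(b in [set: B]) (M a b * N b c)%:E.
Proof.
move=> [M0 M1] sN; rewrite /mc_comp (@fineK_le _ 1) //.
  by apply: esum_ge0 => b _; rewrite lee_fin mulr_ge0 //; apply sN.1.
apply: le_trans (M1 a); apply: le_esum => b _; rewrite lee_fin ler_piMr //.
exact: subst_entry.
Qed.

Lemma subst_comp (A B C : countType) (M : A -> B -> R) (N : B -> C -> R) :
  subst M -> subst N -> subst (mc_comp M N).
Proof.
move=> sM sN; split.
  move=> a c; rewrite -lee_fin comp_E //.
  by apply: esum_ge0 => b _; rewrite lee_fin mulr_ge0 //; [apply sM.1|apply sN.1].
move=> a.
rewrite (eq_esum (b := fun c => \esum_(b in [set: B]) (M a b * N b c)%:E)); last first.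
  by move=> c _; rewrite comp_E.
rewrite esum_swap; last by move=> c b; rewrite lee_fin mulr_ge0 //; [apply sM.1|apply sN.1].
apply: le_trans (sM.2 a); apply: le_esum => b _.
rewrite (eq_esum (b := fun c => (M a b)%:E * (N b c)%:E)); last by move=> c _; rewrite EFinM.
rewrite esumZl; [|apply sM.1|by move=> c; rewrite lee_fin; apply sN.1].
rewrite -[X in _ <= X]mule1; apply: lee_wpmul2l; [rewrite lee_fin; apply sM.1|apply sN.2].
Qed.

Lemma subst_id (A : countType) : subst (@mc_id R A).
Proof.
split; first by move=> a b; rewrite /mc_id ler0n.
move=> a; rewrite (esum_single (j := a)) /mc_id ?eqxx //.
by move=> i /negbTE; rewrite eq_sym => ->.
Qed.

Lemma subst_pow (A : countType) (M : A -> A -> R) n : subst M -> subst (mc_pow n M).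
Proof. move=> sM; elim: n => [|n IH] /=; [exact: subst_id|exact: subst_comp]. Qed.

Lemma subst_taboo (A : countType) (M : A -> A -> R) K : subst M -> subst (mc_taboo M K).
Proof.
move=> [M0 M1]; split; first by move=> a b; rewrite /mc_taboo; case: ifP.
move=> a; apply: le_trans (M1 a); apply: le_esum => b _; rewrite /mc_taboo lee_fin.
by case: ifP.
Qed.

Lemma stoch_subst (A B : countType) (M : A -> B -> R) : mc_stochastic M -> subst M.
Proof. by move=> [M0 M1]; split => // a; rewrite M1. Qed.

Lemma assoc (A : countType) (m : A -> R) (M N : A -> A -> R) j :
  (forall i, 0 <= m i)%R -> \esum_(i in [set: A]) (m i)%:E <= 1 -> subst M -> subst N ->
  \esum_(i in [set: A]) (m i * mc_comp M N i j)%:E =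
  \esum_(k in [set: A]) (fine (\esum_(i in [set: A]) (m i * M i k)%:E) * N k j)%:E.
Proof.
move=> m0 m1 sM sN.
transitivity (\esum_(i in [set: A]) \esum_(k in [set: A])
                 ((m i)%:E * ((M i k)%:E * (N k j)%:E))).
  apply: eq_esum => i _; rewrite EFinM comp_E // -esumZl //.
  by move=> k; rewrite lee_fin mulr_ge0 //; [apply sM.1|apply sN.1].
rewrite esum_swap; last first.
  by move=> i k; rewrite -!EFinM lee_fin !mulr_ge0 //; [apply sM.1|apply sN.1].
apply: eq_esum => k _.
rewrite EFinM (@fineK_le _ 1); first last.
- apply: le_trans m1; apply: le_esum => i _; rewrite lee_fin ler_piMr //.
  exact: subst_entry.
- by apply: esum_ge0 => i _; rewrite lee_fin mulr_ge0 //; apply sM.1.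
rewrite muleC -esumZl; first last.
- by move=> i; rewrite lee_fin mulr_ge0 //; apply sM.1.
- by apply sN.1.
by apply: eq_esum => i _; rewrite -!EFinM; congr (_%:E); ring.
Qed.

End Helpers.
Theorem proposition7 (R : realType) (I It : countType)
  (P : I -> I -> R) (pi : I -> R) (Pt : It -> It -> R) (Lam : It -> I -> R)
  (dt : It) (mut : It -> R) :
  mc_stochastic P -> mc_irreducible P -> mc_positive_recurrent P -> mc_stationary P pi ->
  mc_stochastic Pt -> mc_stochastic Lam ->
  mc_comp Pt Lam = mc_comp Lam P ->
  mc_qsd Pt [set dt] mut ->
  mc_qsd (coupled_kernel P Pt Lam) [set p | p.2 = dt]
      (fun p : I * It => if p.2 == dt then 0 else mut p.2 * Lam p.2 p.1).
Proof.
move=> sP _ _ _ sPt sLam comm [mut0 mutK mut1 muq].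
have mutdt : mut dt = 0 by apply: mutK.
have sP' := stoch_subst sP; have sPt' := stoch_subst sPt; have sLam' := stoch_subst sLam.
have P0 := sP'.1; have Pt0 := sPt'.1; have Lam0 := sLam'.1.
have sQt : subst (mc_taboo Pt [set dt]) := subst_taboo _ sPt'.
have LPE : forall xt y, (mc_comp Lam P xt y)%:E = \esum_(z in [set: It]) (Pt xt z * Lam z y)%:E.
  by move=> xt y; rewrite -comm comp_E.
have LP0 : forall xt y, 0 <= mc_comp Lam P xt y by move=> xt y; apply: (subst_comp sLam' sP').1.
have C0 : forall p q, 0 <= coupled_kernel P Pt Lam p q.
  move=> [x xt] [y yt]; rewrite /coupled_kernel /=; case: ifP => // h.
  apply: divr_ge0; [exact: mulr_ge0 (mulr_ge0 (P0 _ _) (Pt0 _ _)) (Lam0 _ _)|exact: ltW].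
have sC : subst (coupled_kernel P Pt Lam).
  split; first exact: C0.
  move=> [x xt].
  rewrite esum_pair; last by move=> p; rewrite lee_fin.
  rewrite -(sP.2 x); apply: le_esum => y _.
  rewrite /coupled_kernel /=.
  have [h|h] := boolP (0 < mc_comp Lam P xt y); last first.
    by rewrite esum1 ?lee_fin // => yt _; rewrite (negbTE h).
  rewrite (eq_esum (b := fun yt => ((P x y / mc_comp Lam P xt y)%:E * (Pt xt yt * Lam yt y)%:E)%E)); last first.
    by move=> yt _; rewrite -EFinM; congr (_%:E); ring.
  rewrite esumZl; first last.
  - by move=> yt; rewrite lee_fin mulr_ge0.
  - by rewrite divr_ge0 // ltW.
  by rewrite -LPE -EFinM divfK ?gt_eqF.
have sQ := subst_taboo [set p : I * It | p.2 = dt] sC.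
pose mu := fun p : I * It => if p.2 == dt then 0 else mut p.2 * Lam p.2 p.1.
change (mc_qsd (coupled_kernel P Pt Lam) [set p | p.2 = dt] mu).
pose nu := fun n yt => surv_prob Pt [set dt] mut n yt.
have mut_le1 : (\esum_(i in [set: It]) (mut i)%:E <= 1)%E.
  rewrite (esum_zero_off (K := [set dt])) ?mut1 //;
    try (by move=> j ->; rewrite mutdt); try (by move=> j; rewrite lee_fin).
have mu0 : forall p, 0 <= mu p by move=> p; rewrite /mu; case: ifP => // _; exact: mulr_ge0.
have sumL : forall w : It -> R, (forall z, 0 <= w z) ->
    \esum_(p in ~` [set p : I * It | p.2 = dt]) (w p.2 * Lam p.2 p.1)%:E =
    \esum_(yt in ~` [set dt]) (w yt)%:E.
  move=> w w0; rewrite esum_mkcond esum_pair; last first.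
    by move=> p; case: ifP => // _; rewrite lee_fin mulr_ge0.
  rewrite esum_swap; last first.
    by move=> y yt; case: ifP => // _; rewrite lee_fin mulr_ge0.
  rewrite [RHS]esum_mkcond; apply: eq_esum => yt _.
  have memE : forall y, ((y, yt) \in ~` [set p : I * It | p.2 = dt]) = (yt \in ~` [set dt]).
    by move=> y; apply/idP/idP => /set_mem h; apply/mem_set.
  rewrite (eq_esum (b := fun y => if yt \in ~` [set dt] then (w yt * Lam yt y)%:E else 0)); last first.
    by move=> y _; rewrite memE.
  case: ifP => _; last by rewrite esum1.
  rewrite (eq_esum (b := fun y => ((w yt)%:E * (Lam yt y)%:E)%E)); last by move=> y _; rewrite EFinM.
  by rewrite esumZl // ?(sLam.2 yt) ?mule1 // => y; rewrite lee_fin.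
have muS : \esum_(j in ~` [set p : I * It | p.2 = dt]) (mu j)%:E = 1%E.
  rewrite (eq_esum (b := fun p => (mut p.2 * Lam p.2 p.1)%:E)); first by rewrite sumL.
  by move=> [y yt] /= h; rewrite /mu /= ifN //; apply/eqP.
have mu_le1 : (\esum_(j in [set: I * It]) (mu j)%:E <= 1)%E.
  rewrite (esum_zero_off (K := [set p : I * It | p.2 = dt])) ?muS //;
    try (by move=> [y yt] /= ->; rewrite /mu /= eqxx); try (by move=> j; rewrite lee_fin).
have nuR : forall n yt, (nu n.+1 yt)%:E =
    \esum_(k in [set: It]) (nu n k * mc_taboo Pt [set dt] k yt)%:E.
  move=> n yt; rewrite /nu /surv_prob (fineK_le (c:=1)); first last.
  - apply: le_trans mut_le1; apply: le_esum => i _; rewrite lee_fin ler_piMr //.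
    exact: subst_entry (subst_pow _ sQt).
  - by apply: esum_ge0 => i _; rewrite lee_fin mulr_ge0 //; apply (subst_pow _ sQt).1.
  by rewrite assoc //; apply: subst_pow.
have nu0 : forall n yt, 0 <= nu n yt.
  move=> n yt; apply: fine_ge0; apply: esum_ge0 => i _; rewrite lee_fin mulr_ge0 //.
  by apply (subst_pow _ sQt).1.
have main : forall n y yt,
    surv_prob (coupled_kernel P Pt Lam) [set p | p.2 = dt] mu n (y, yt) = nu n yt * Lam yt y.
  elim => [|n IH] y yt.
    rewrite /nu /surv_prob /= (esum_single (j := (y, yt))); first last.
    - by rewrite /mc_id eqxx mulr1 lee_fin.
    - by move=> i /negbTE h; rewrite /mc_id h mulr0.
    rewrite (esum_single (j := yt)); first last.
    - by rewrite /mc_id eqxx mulr1 lee_fin.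
    - by move=> i /negbTE h; rewrite /mc_id h mulr0.
    rewrite /mc_id !eqxx !mulr1 /= /mu /=.
    by case: eqP => [->|_]; rewrite ?mutdt ?mul0r.
  have step : surv_prob (coupled_kernel P Pt Lam) [set p | p.2 = dt] mu n.+1 (y, yt) =
      fine (\esum_(k in [set: I * It]) (surv_prob (coupled_kernel P Pt Lam) [set p | p.2 = dt] mu n k *
              mc_taboo (coupled_kernel P Pt Lam) [set p | p.2 = dt] k (y, yt))%:E).
    by rewrite /surv_prob assoc //; apply: subst_pow.
  rewrite step (eq_esum (b := fun k => (nu n k.2 * Lam k.2 k.1 *
              mc_taboo (coupled_kernel P Pt Lam) [set p | p.2 = dt] k (y, yt))%:E)); last first.
    by move=> [x xt] _; rewrite IH.
  have [->|ne] := eqVneq yt dt.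
    rewrite esum1; last by move=> k _; rewrite /mc_taboo asboolT // mulr0.
    rewrite -[nu n.+1 dt]/(fine (nu n.+1 dt)%:E) nuR esum1 ?mul0r //.
    by move=> k _; rewrite /mc_taboo asboolT // mulr0.
  have ne' : ~ (yt = dt) by apply/eqP.
  rewrite esum_pair; last by move=> p; rewrite lee_fin; exact: mulr_ge0 (mulr_ge0 (nu0 _ _) (Lam0 _ _)) (sQ.1 _ _).
  rewrite esum_swap; last by move=> x xt; rewrite lee_fin; exact: mulr_ge0 (mulr_ge0 (nu0 _ _) (Lam0 _ _)) (sQ.1 _ _).
  rewrite (eq_esum (b := fun xt => ((Lam yt y)%:E * (nu n xt * mc_taboo Pt [set dt] xt yt)%:E)%E)).
    rewrite esumZl //; last by move=> xt; rewrite lee_fin; exact: mulr_ge0 (nu0 _ _) (sQt.1 _ _).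
    by rewrite -nuR -EFinM /= mulrC.
  move=> xt _.
  rewrite /mc_taboo asboolF // /coupled_kernel /=.
  have [h|h] := boolP (0 < mc_comp Lam P xt y); last first.
    rewrite esum1; last by move=> x _; rewrite mulr0.
    have le : ((Pt xt yt * Lam yt y)%:E <= (mc_comp Lam P xt y)%:E)%E.
      rewrite LPE; apply: (@entry_le _ _ (fun z => (Pt xt z * Lam z y)%:E)) => z.
      by rewrite lee_fin mulr_ge0.
    have LPz : mc_comp Lam P xt y = 0.
      by apply/eqP; rewrite eq_le LP0 andbT leNgt h.
    have e : Pt xt yt * Lam yt y = 0.
      by apply/eqP; rewrite eq_le mulr_ge0 // andbT -lee_fin -LPz.
    rewrite -EFinM (_ : Lam yt y * (nu n xt * Pt xt yt) = nu n xt * (Pt xt yt * Lam yt y)).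
      by rewrite e mulr0.
    by ring.
  rewrite (eq_esum (b := fun x => ((nu n xt * Pt xt yt * Lam yt y / mc_comp Lam P xt y)%:E *
                                   (Lam xt x * P x y)%:E)%E)); last first.
    by move=> x _; rewrite -EFinM; congr (_%:E); ring.
  rewrite esumZl; first last.
  - by move=> x; rewrite lee_fin mulr_ge0.
  - by rewrite divr_ge0 ?(ltW h) //; exact: mulr_ge0 (mulr_ge0 (nu0 _ _) (Pt0 _ _)) (Lam0 _ _).
  rewrite -comp_E // -EFinM divfK ?gt_eqF //.
  by congr (_%:E); ring.
have ST : forall n, surv_total (coupled_kernel P Pt Lam) [set p | p.2 = dt] mu n =
    surv_total Pt [set dt] mut n.
  move=> n; rewrite /surv_total (eq_esum (b := fun p => (nu n p.2 * Lam p.2 p.1)%:E)).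
    by rewrite sumL.
  by move=> [y yt] _; rewrite main.
split.
- exact: mu0.
- by move=> [y yt] /= ->; rewrite /mu /= eqxx.
- exact: muS.
move=> n; have [Sp Sq] := muq n; split; first by rewrite ST.
move=> [y yt] /= h; rewrite ST main /mu /= ifN; last by apply/eqP.
by rewrite mulrAC Sq.
Qed.
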